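(* Let $G=(V,E)$ be a finite multigraph with a two-edge-connected subgraph $H=(W,F)$. If a partition $\pi$ of $V$ is such that $G^\pi$ is a cactus, then the sub-quotient $H^{\pi|_W}$ is also a cactus. Similarly, if $G$ is a directed multigraph and $G^\pi$ is an oriented cactus, then $H^{\pi|_W}$ is also an oriented cactus.
   Context: $G^\pi$ identifies the vertices in each block of $\pi$; $\pi|_W$ is the restriction of $\pi$ to $W$. A cactus is a connected multigraph in which every edge belongs to exactly one simple cycle (loops and pairs of parallel edges count as cycles); its cycles are its pads. An oriented cactus is a directed multigraph whose underlying multigraph is a cactus and whose pads are directed cycles. Two-edge-connected: connected with no cut-edge. *)

(* Defs.v *)
From mathcomp Require Import all_boot.
Set Implicit Arguments. Unset Strict Implicit. Unset Printing Implicit Defensive.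

(* A (multi)graph is given by a vertex set Vs : {set V}, an edge set
   Es : {set E} and endpoint maps s t : E -> V (edge e joins s e and t e;
   loops s e = t e and parallel edges are allowed).  For undirected notions
   the orientation s -> t is ignored; for directed notions e goes s e -> t e. *)

Section Graphs.
Variables (V E : finType) (s t : E -> V).

Definition adj (Es : {set E}) : rel V :=
  fun x y => [exists e in Es, ((s e == x) && (t e == y)) || ((t e == x) && (s e == y))].

Definition connected_graph (Vs : {set V}) (Es : {set E}) : Prop :=
  forall x y, x \in Vs -> y \in Vs -> connect (adj Es) x y.

Definition two_edge_connected (Vs : {set V}) (Es : {set E}) : Prop :=
  connected_graph Vs Es /\ forall e, e \in Es -> connected_graph Vs (Es :\ e).

(* degree of v in the edge set C (a loop counts twice) *)
Definition deg (C : {set E}) (v : V) : nat :=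
  #|[set e in C | s e == v]| + #|[set e in C | t e == v]|.

Definition outdeg (C : {set E}) (v : V) : nat := #|[set e in C | s e == v]|.
Definition indeg (C : {set E}) (v : V) : nat := #|[set e in C | t e == v]|.

Definition support (C : {set E}) : {set V} := [set v | 0 < deg C v].

Definition simple_cycle (C : {set E}) : Prop :=
  C != set0 /\ (forall v, v \in support C -> deg C v = 2)
  /\ connected_graph (support C) C.

Definition cactus (Vs : {set V}) (Es : {set E}) : Prop :=
  connected_graph Vs Es /\
  forall e, e \in Es ->
    (exists C : {set E}, [/\ C \subset Es, simple_cycle C & e \in C]) /\
    (forall C1 C2 : {set E}, C1 \subset Es -> simple_cycle C1 -> e \in C1 ->
                   C2 \subset Es -> simple_cycle C2 -> e \in C2 -> C1 = C2).

Definition directed_cycle (C : {set E}) : Prop :=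
  forall v, v \in support C -> indeg C v = 1 /\ outdeg C v = 1.

Definition oriented_cactus (Vs : {set V}) (Es : {set E}) : Prop :=
  cactus Vs Es /\
  forall C : {set E}, C \subset Es -> simple_cycle C -> directed_cycle C.

End Graphs.

Definition restr_partition (V : finType) (pi : {set {set V}}) (W : {set V})
  : {set {set V}} := [set B :&: W | B in pi & B :&: W != set0].

(* The quotient G^pi of a graph with edge set Es and ends s,t by a partition
   pi of its vertex set has vertex set pi, edge set Es, and ends
   pblock pi \o s, pblock pi \o t (all edges kept, loops included). *)

(* Main.v *)
From mathcomp Require Import all_boot.
From mathcomp Require Import zify.
Require Import Defs.
Set Implicit Arguments. Unset Strict Implicit. Unset Printing Implicit Defensive.

Lemma homo_conn (T U : finType) (e : rel T) (e' : rel U) (f : T -> U) x y :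
  (forall a b, e a b -> e' (f a) (f b)) -> connect e x y -> connect e' (f x) (f y).
Proof.
move=> H /connectP[p Hp ->]; elim: p x Hp => [|z p IH] x /=; first by rewrite connect0.
case/andP=> exz /IH; apply: connect_trans; apply: connect1; exact: H.
Qed.

Section Cyc.
Variables (P E : finType) (s t : E -> P).

Definition ldeg (l : seq E) w := count (fun f => s f == w) l + count (fun f => t f == w) l.

Lemma adj_sub (A B : {set E}) : A \subset B -> subrel (adj s t A) (adj s t B).
Proof.
move=> AB a b /existsP[f /andP[fA H]]; apply/existsP; exists f.
by rewrite (subsetP AB _ fA).
Qed.

Lemma adj_symm (A : {set E}) : symmetric (adj s t A).
Proof.
move=> a b; apply/existsP/existsP=> -[f /andP[fA H]]; exists f; rewrite fA /=;
  by case/orP: H => /andP[-> ->]; rewrite ?orbT.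
Qed.

Lemma path_edges (A : {set E}) x p : path (adj s t A) x p -> uniq (x :: p) ->
  exists es : seq E, [/\ uniq es, {subset es <= A},
    path (adj s t [set:: es]) x p,
    {subset es <= [pred f | (s f \in x :: p) && (t f \in x :: p)]} &
    forall w, ldeg es w + (w == x) + (w == last x p) = 2 * (w \in x :: p)].
Proof.
elim: p x => [|z p IH] x /=.
  move=> _ _; exists [::]; split=> //= w; rewrite /ldeg /= inE; by case: (w == x).
case/andP=> /existsP[f0 /andP[f0A J]] Hp /andP[xn /andP[zn Up]].
have [es [Ues esA Pes Ees Des]] := IH z Hp (introT andP (conj zn Up)).
have xz : (x != z) by apply: contraNneq xn => ->; rewrite inE eqxx.
exists (f0 :: es); split.
- rewrite /= Ues andbT; apply/negP=> /Ees /= /andP[Hs Ht].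
  by case/orP: J => /andP[/eqP E1 /eqP E2]; move: xn; rewrite -E1 ?Hs ?Ht.
- by move=> g; rewrite inE => /orP[/eqP ->|/esA].
- rewrite /=; apply/andP; split.
    apply/existsP; exists f0; by rewrite set_cons setU11 J.
  by apply: sub_path Pes; apply: adj_sub; rewrite set_cons subsetUr.
- move=> g; rewrite inE => /orP[/eqP ->|gin].
    rewrite inE /=; case/orP: J => /andP[/eqP -> /eqP ->]; by rewrite !inE !eqxx ?orbT.
  have := Ees g gin; rewrite !inE => /andP[H1 H2].
  by rewrite H1 H2 !orbT.
- move=> w; have := Des w; rewrite /ldeg /=.
  have J' : (s f0 == w) + (t f0 == w) = (x == w) + (z == w).
    by case/orP: J => /andP[/eqP -> /eqP ->]; rewrite addnC.
  move: J'; rewrite [in X in _ -> _ -> X]inE.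
  set a := count _ es; set b := count _ es; clearbody a b.
  move: (nat_of_bool (s f0 == w)) (nat_of_bool (t f0 == w)) => sf tf.
  move: (nat_of_bool (w == last z p)) => wl.
  case: (eqVneq w x) => [->|nwx].
    have -> : (x \in z :: p) = false by apply/negbTE.
    rewrite [z == x]eq_sym (negbTE xz) /= => H1 H2; clear -H1 H2.
    lia.
  rewrite (eq_sym z w).
  move: (nat_of_bool (w == z)) (w \in z :: p) => wz [] /= H1 H2; clear -H1 H2; lia.
Qed.

Lemma count_set (l : seq E) (Q : pred E) : uniq l ->
  #|[set f in [set:: l] | Q f]| = count Q l.
Proof.
move=> Ul; have -> : [set f in [set:: l] | Q f] = [set:: filter Q l].
  by apply/setP=> f; rewrite !inE mem_filter andbC.
by rewrite cardsE (card_uniqP _) ?filter_uniq // size_filter.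
Qed.

Lemma cycle_of_path (F : {set E}) e : e \in F ->
  connect (adj s t (F :\ e)) (s e) (t e) ->
  exists C : {set E}, [/\ C \subset F, simple_cycle s t C & e \in C].
Proof.
move=> eF /connectP[p0 Hp0 Hl].
case: (shortenP Hp0) Hl => p Hp Up _ Hl.
have [es [Ues esA Pes Ees Des]] := path_edges Hp Up.
have ees : e \notin es by apply/negP=> /esA; rewrite !inE eqxx.
have UC : uniq (e :: es) by rewrite /= ees.
set C := [set:: e :: es].
have degC w : deg s t C w = 2 * (w \in s e :: p).
  rewrite /deg !count_set //= -Des -Hl /ldeg (eq_sym (s e)) (eq_sym (t e)).
  move: (count _ es) (count _ es) (nat_of_bool (w == s e)) (nat_of_bool (w == t e)).
  clear; move=> *; lia.
exists C; split.
- apply/subsetP=> f; rewrite inE inE => /orP[/eqP ->//|/esA]; rewrite !inE.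
  by case/andP.
- split; first by apply/set0Pn; exists e; rewrite inE inE eqxx.
  split; first by move=> v; rewrite inE degC; case: (v \in _).
  have supp v : v \in support s t C -> connect (adj s t C) (s e) v.
    rewrite inE degC; case vin: (v \in _) => // _.
    apply: (path_connect (sub_path _ Pes)) => //.
    by apply: adj_sub; rewrite /C set_cons subsetUr.
  move=> a b /supp Ha /supp Hb; apply: connect_trans Hb.
  by rewrite (sym_connect_sym (adj_symm C)).
- by rewrite inE inE eqxx.
Qed.
End Cyc.

Lemma supp_end (P E : finType) (s t : E -> P) (C : {set E}) v :
  v \in support s t C -> exists2 e, e \in C & (s e = v \/ t e = v).
Proof.
rewrite inE /deg addn_gt0 => /orP[] /card_gt0P[e]; rewrite inE => /andP[eC /eqP H];
  exists e => //; by [left | right].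
Qed.

Lemma adj_map (V P E : finType) (s t : E -> V) (f : V -> P) (A : {set E}) a b :
  adj s t A a b -> adj (f \o s) (f \o t) A (f a) (f b).
Proof.
case/existsP=> e /andP[eA H]; apply/existsP; exists e; rewrite eA /=.
by case/orP: H => /andP[/eqP -> /eqP ->]; rewrite !eqxx ?orbT.
Qed.

Section Transfer.
Variables (V E : finType) (s t : E -> V) (W : {set V}) (F : {set E})
  (pi : {set {set V}}).
Hypothesis hF : forall e, e \in F -> s e \in W /\ t e \in W.
Hypothesis Hpart : partition pi [set: V].

Let R := restr_partition pi W.

Lemma triv_pi : trivIset pi.
Proof. by case/and3P: Hpart. Qed.

Lemma cov_pi x : x \in cover pi.
Proof. by case/and3P: Hpart => /eqP -> _ _; rewrite inE. Qed.

Lemma pb_pi x : pblock pi x \in pi.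
Proof. exact: pblock_mem (cov_pi x). Qed.

Lemma in_pb x : x \in pblock pi x.
Proof. by rewrite mem_pblock cov_pi. Qed.

Lemma inR X : X \in R -> exists2 B, B \in pi & X = B :&: W /\ X != set0.
Proof.
case/imsetP=> B; rewrite inE => /andP[Bpi BW] ->; by exists B.
Qed.

Lemma triv_R : trivIset R.
Proof.
apply/trivIsetP=> X Y /inR[B1 B1pi [-> _]] /inR[B2 B2pi [-> _]] neq.
have nB : B1 != B2 by apply: contraNneq neq => ->.
have D := trivIsetP triv_pi B1 B2 B1pi B2pi nB.
apply: (disjointWl (subsetIl _ _)); apply: (disjointWr (subsetIl _ _)); exact: D.
Qed.

Lemma pbR x : x \in W -> pblock R x = pblock pi x :&: W.
Proof.
move=> xW; apply: def_pblock; first exact: triv_R.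
  apply/imsetP; exists (pblock pi x) => //; rewrite inE pb_pi /=.
  by apply/set0Pn; exists x; rewrite inE in_pb xW.
by rewrite inE in_pb xW.
Qed.

Lemma eq_blk x B : x \in W -> B \in pi ->
  (pblock pi x :&: W == B :&: W) = (pblock pi x == B).
Proof.
move=> xW Bpi; apply/eqP/eqP => [H|->] //.
have : x \in B :&: W by rewrite -H inE in_pb xW.
by rewrite inE => /andP[xB _]; apply: def_pblock triv_pi Bpi xB.
Qed.

Lemma setsF (C : {set E}) (f : E -> V) B : C \subset F -> B \in pi ->
  (forall e, e \in F -> f e \in W) ->
  [set e in C | pblock R (f e) == B :&: W] = [set e in C | pblock pi (f e) == B].
Proof.
move=> CF Bpi fW; apply/setP=> e; rewrite !inE; case eC: (e \in C) => //=.
have fe := fW e (subsetP CF _ eC).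
by rewrite pbR // eq_blk.
Qed.

Let s1 := pblock pi \o s.
Let t1 := pblock pi \o t.
Let s2 := pblock R \o s.
Let t2 := pblock R \o t.

Lemma sW e : e \in F -> s e \in W. Proof. by case/hF. Qed.
Lemma tW e : e \in F -> t e \in W. Proof. by case/hF. Qed.

Lemma outdegT (C : {set E}) B : C \subset F -> B \in pi ->
  outdeg s2 C (B :&: W) = outdeg s1 C B.
Proof. by move=> CF Bpi; rewrite /outdeg /s2 /s1 /= (setsF CF Bpi sW). Qed.

Lemma indegT (C : {set E}) B : C \subset F -> B \in pi ->
  indeg t2 C (B :&: W) = indeg t1 C B.
Proof. by move=> CF Bpi; rewrite /indeg /t2 /t1 /= (setsF CF Bpi tW). Qed.

Lemma degT (C : {set E}) B : C \subset F -> B \in pi ->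
  deg s2 t2 C (B :&: W) = deg s1 t1 C B.
Proof.
move=> CF Bpi; rewrite /deg /s2 /s1 /t1 /t2 /=.
by rewrite (setsF CF Bpi sW) (setsF CF Bpi tW).
Qed.

Definition gmap (X : {set V}) : {set V} :=
  if [pick x in X] is Some x then pblock pi x else set0.

Lemma gmapE x : x \in W -> gmap (pblock R x) = pblock pi x.
Proof.
move=> xW; rewrite /gmap; case: pickP => [y|H].
  rewrite pbR // inE => /andP[yB _].
  by apply: def_pblock triv_pi (pb_pi x) yB.
by have := H x; rewrite pbR // inE in_pb xW.
Qed.

Lemma supp2 (C : {set E}) X : C \subset F -> X \in support s2 t2 C ->
  exists2 y, y \in W & X = pblock R y.
Proof.
move=> CF /supp_end[e eC [<-|<-]]; have eF := subsetP CF _ eC.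
  by exists (s e); [apply: sW|].
by exists (t e); [apply: tW|].
Qed.

Lemma supp1 (C : {set E}) B : C \subset F -> B \in support s1 t1 C ->
  exists2 y, y \in W & B = pblock pi y.
Proof.
move=> CF /supp_end[e eC [<-|<-]]; have eF := subsetP CF _ eC.
  by exists (s e); [apply: sW|].
by exists (t e); [apply: tW|].
Qed.

Lemma simple21 (C : {set E}) : C \subset F -> simple_cycle s2 t2 C -> simple_cycle s1 t1 C.
Proof.
move=> CF [Cn [D2 Con2]]; split=> //; split.
  move=> B BS; have [y yW By] := supp1 CF BS.
  have Bpi : B \in pi by rewrite By pb_pi.
  rewrite -degT // D2 // inE degT //; by rewrite inE in BS.
move=> B1 B2 S1 S2.
have [y1 y1W E1] := supp1 CF S1; have [y2 y2W E2] := supp1 CF S2.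
have T1 : pblock R y1 \in support s2 t2 C.
  by rewrite pbR // inE -E1 degT ?E1 ?pb_pi // -E1; rewrite inE in S1.
have T2 : pblock R y2 \in support s2 t2 C.
  by rewrite pbR // inE -E2 degT ?E2 ?pb_pi // -E2; rewrite inE in S2.
have := Con2 _ _ T1 T2 => /(homo_conn (f := gmap) (e' := adj s1 t1 C)).
rewrite !gmapE // -E1 -E2; apply.
move=> a b /existsP[e /andP[eC H]]; apply/existsP; exists e; rewrite eC /=.
have eF := subsetP CF _ eC.
by case/orP: H => /andP[/eqP <- /eqP <-]; rewrite /s2 /t2 /s1 /t1 /= !gmapE ?sW ?tW // !eqxx ?orbT.
Qed.

Lemma directed12 (C : {set E}) : C \subset F -> directed_cycle s1 t1 C -> directed_cycle s2 t2 C.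
Proof.
move=> CF D X XS; have [y yW EX] := supp2 CF XS; subst X.
move: XS; rewrite inE pbR // => XS; rewrite outdegT ?indegT ?pb_pi //.
by apply: D; rewrite inE -degT ?pb_pi.
Qed.

Lemma cactus_part : two_edge_connected s t W F ->
  cactus s1 t1 pi [set: E] -> cactus s2 t2 R F.
Proof.
move=> [Hc Hc2] [_ H1]; split.
  move=> X Y XR YR.
  have [B Bpi [EX nX]] := inR XR; have [B' B'pi [EY nY]] := inR YR.
  case/set0Pn: nX => x xX; case/set0Pn: nY => y yY.
  have xW : x \in W by move: xX; rewrite EX inE => /andP[].
  have yW : y \in W by move: yY; rewrite EY inE => /andP[].
  rewrite -(def_pblock triv_R XR xX) -(def_pblock triv_R YR yY).
  apply: homo_conn (Hc x y xW yW) => a b; exact: adj_map.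
move=> e eF; split.
  apply: (cycle_of_path (s := s2) (t := t2) eF).
  have := Hc2 e eF (s e) (t e) (sW eF) (tW eF).
  by apply: homo_conn => a b; apply: adj_map.
move=> C1 C2 C1F S1 e1 C2F S2 e2.
have [_ U] := H1 e (in_setT e).
by apply: U; rewrite ?subsetT //; apply: simple21.
Qed.

End Transfer.

Theorem corollary2p15 (V E : finType) (s t : E -> V)
  (W : {set V}) (F : {set E}) (pi : {set {set V}}) :
  (forall e, e \in F -> s e \in W /\ t e \in W) ->
  two_edge_connected s t W F ->
  partition pi [set: V] ->
  (cactus (pblock pi \o s) (pblock pi \o t) pi [set: E] ->
   cactus (pblock (restr_partition pi W) \o s) (pblock (restr_partition pi W) \o t)
          (restr_partition pi W) F) /\
  (oriented_cactus (pblock pi \o s) (pblock pi \o t) pi [set: E] ->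
   oriented_cactus (pblock (restr_partition pi W) \o s)
                   (pblock (restr_partition pi W) \o t)
                   (restr_partition pi W) F).
Proof.
move=> hF H2 Hp; split; first exact: cactus_part.
move=> [Hc Hd]; split; first exact: cactus_part.
move=> C CF SC.
exact: (directed12 hF Hp CF (Hd C (subsetT C) (simple21 hF Hp CF SC))).
Qed.
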